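(* Let $p\ge2$ and $n,\ell,t$ be positive integers. Every $t$-tandem-duplication-correcting code $\mathcal{C}\subseteq\mathbb{Z}_p^n$ with respect to duplication length $\ell$ satisfies $$|\mathcal{C}|\le\frac{t!}{(n+(t-1)\ell)^t}\cdot\frac{p^{n+t(\ell+1)}}{(p-1)^t}.$$
   Context: $\mathbb{Z}_p=\{0,1,\dots,p-1\}$ with arithmetic mod $p$. For a word $\mathbf{x}$ over $\mathbb{Z}_p$ and $0\le i\le|\mathbf{x}|-\ell$, write $\mathbf{x}=\mathbf{u}\mathbf{v}\mathbf{w}$ with $|\mathbf{u}|=i$, $|\mathbf{v}|=\ell$; the tandem duplication of length $\ell$ at position $i$ produces $\mathbf{u}\mathbf{v}\mathbf{v}\mathbf{w}$. The ball $B_t^{\tau_\ell}(\mathbf{x})$ is the set of words obtainable from $\mathbf{x}$ by at most $t$ successive tandem duplications of length $\ell$. A code $\mathcal{C}\subseteq\mathbb{Z}_p^n$ is $t$-tandem-duplication-correcting (duplication length $\ell$) if $B_t^{\tau_\ell}(\mathbf{c})\cap B_t^{\tau_\ell}(\mathbf{c}')=\emptyset$ for all distinct $\mathbf{c},\mathbf{c}'\in\mathcal{C}$. *)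

(* Defs.v *)
From mathcomp Require Import all_boot all_order all_algebra.
Set Implicit Arguments. Unset Strict Implicit. Unset Printing Implicit Defensive.

(* tandem duplication of length l at position i: x = u v w, |u| = i, |v| = l,
   result u v v w *)
Definition tdup (T : Type) (l i : nat) (x : seq T) : seq T :=
  take i x ++ take l (drop i x) ++ drop i x.

Definition dup_step (T : Type) (l : nat) (x y : seq T) : Prop :=
  exists i, (i + l <= size x)%N /\ y = tdup l i x.

Fixpoint tball (T : Type) (l t : nat) (x : seq T) (y : seq T) : Prop :=
  match t with
  | 0 => y = x
  | t'.+1 => tball l t' x y \/ exists z, tball l t' x z /\ dup_step l z y
  end.

Definition tdup_correcting (p n l t : nat) (C : {set n.-tuple 'I_p}) : Prop :=
  forall c c' : n.-tuple 'I_p, c \in C -> c' \in C -> c != c' ->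
    forall y : seq 'I_p, ~ (tball l t (val c) y /\ tball l t (val c') y).

(* Main.v *)
Require Import Defs.
From mathcomp Require Import all_boot all_order all_algebra.
From mathcomp Require Import zify ring.
From Stdlib Require Import ClassicalEpsilon.
Set Implicit Arguments. Unset Strict Implicit. Unset Printing Implicit Defensive.

Section Bool.
Variable l : nat.

Definition ins (i : nat) (d : seq bool) := take i d ++ nseq l false ++ drop i d.

Fixpoint reach (s : nat) (d e : seq bool) : Prop :=
  match s with
  | 0 => e = d
  | s'.+1 => exists e' i, reach s' d e' /\ (i <= size e')%N /\ e = ins i e'
  end.

Lemma reach_sc s d e : reach s d e -> size e = size d + s * l /\ count id e = count id d.
Proof.
elim: s e => [|s IH] e /=; first by move=> ->; rewrite addn0.
move=> [e' [i [/IH [H1 H2] [Hi ->]]]].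
rewrite /ins !size_cat size_nseq !count_cat count_nseq /= mul0n add0n; split.
  by rewrite addnCA -size_cat cat_take_drop H1 mulSn; lia.
by rewrite -count_cat cat_take_drop.
Qed.

Lemma reach_trans a b d e f : reach a d e -> reach b e f -> reach (a + b) d f.
Proof.
move=> Ha; elim: b f => [|b IH] f /=; first by move=> ->; rewrite addn0.
move=> [f' [i [Hf [Hi ->]]]]; rewrite addnS /=; exists f', i; split=> //; exact: IH.
Qed.

Lemma reach_pre pre s d e : reach s d e -> reach s (pre ++ d) (pre ++ e).
Proof.
elim: s e => [|s IH] e /=; first by move=> ->.
move=> [e' [i [Hr [Hi ->]]]]; exists (pre ++ e'), (size pre + i); split; first exact: IH.
split; first by rewrite size_cat leq_add2l.
rewrite /ins take_cat drop_cat ltnNge leq_addr /= addKn catA //.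
Qed.

Lemma reach_front j d : reach j d (nseq (j * l) false ++ d).
Proof.
elim: j => [|j IH] /=; first by [].
exists (nseq (j * l) false ++ d), 0; split=> //; split=> //.
by rewrite /ins take0 drop0 /= mulSn nseqD catA.
Qed.

Fixpoint gen (z : nat) (d : seq bool) (s : nat) : seq (seq bool) :=
  match d with
  | [::] => [:: nseq (z + s * l) false]
  | false :: d' => gen z.+1 d' s
  | true :: d' => [seq nseq (z + (s - r) * l) false ++ true :: e | r <- iota 0 s.+1, e <- gen 0 d' r]
  end.

Lemma hockey k s : sumn [seq 'C(k + r, r) | r <- iota 0 s.+1] = 'C(k.+1 + s, s).
Proof.
elim: s => [|s IH]; first by rewrite /= !bin0.
have -> : iota 0 s.+2 = iota 0 s.+1 ++ [:: s.+1] by rewrite -addn1 iotaD.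
rewrite map_cat sumn_cat IH /= addn0.
by rewrite !addSn !addnS [RHS]binS addnC.
Qed.

Lemma index_pre k e : index true (nseq k false ++ true :: e) = k.
Proof. by elim: k => //= k ->. Qed.

Lemma gen_true z d s : gen z (true :: d) s =
  [seq nseq (z + (s - r) * l) false ++ true :: e | r <- iota 0 s.+1, e <- gen 0 d r].
Proof. by []. Qed.

Lemma gen_props (hl : (0 < l)%N) (d : seq bool) : forall z s,
  [/\ uniq (gen z d s), size (gen z d s) = 'C(count id d + s, s) &
      forall e, e \in gen z d s -> reach s (nseq z false ++ d) e].
Proof.
elim: d => [|b d IH] z s.
  rewrite /=; split=> //; first by rewrite add0n binn.
  move=> e; rewrite inE => /eqP ->; rewrite cats0 addnC nseqD; exact: reach_front.
case: b.
  rewrite gen_true [count _ (true :: _)]/= add1n; split.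
  - apply: (@allpairs_uniq_dep nat (fun _ => seq bool)); first exact: iota_uniq.
      by move=> r _; case: (IH 0 r).
    move=> [r1 e1] [r2 e2] /allpairsPdep [r1' [e1' [Hr1 _ [-> ->]]]]
      /allpairsPdep [r2' [e2' [Hr2 _ [-> ->]]]] /= Heq.
    have := congr1 (index true) Heq; rewrite !index_pre => Hz.
    move: Hr1 Hr2; rewrite !mem_iota /= !add0n => Hr1 Hr2.
    have Er : r1' = r2'.
      have : (s - r1') * l = (s - r2') * l by lia.
      by move/eqP; rewrite eqn_pmul2r // => /eqP; lia.
    subst r2'; congr (Tagged _ _).
    by move: Heq => /eqP; rewrite eqseq_cat // eqseq_cons => /andP [_ /eqP].
  - rewrite size_allpairs_dep.
    rewrite (_ : [seq size (gen 0 d r) | r <- iota 0 s.+1] = [seq 'C(count id d + r, r) | r <- iota 0 s.+1]).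
      by rewrite hockey addSn.
    by apply: eq_map => r; case: (IH 0 r).
  - move=> e /allpairsPdep [r [e0 [Hr He0 ->]]].
    move: Hr; rewrite mem_iota add0n => Hr.
    have [_ _ H] := IH 0 r; have := H e0 He0 => /= Hre.
    have -> : s = (s - r) + r by lia.
    apply: reach_trans (reach_front _ _) _.
    rewrite addnK catA -nseqD (addnC _ z).
    have -> : nseq (z + (s - r) * l) false ++ true :: d = (nseq (z + (s - r) * l) false ++ [:: true]) ++ d by rewrite -catA.
    have -> : nseq (z + (s - r) * l) false ++ true :: e0 = (nseq (z + (s - r) * l) false ++ [:: true]) ++ e0 by rewrite -catA.
    exact: reach_pre.
have [H1 H2 H3] := IH z.+1 s; rewrite /=; split=> //.
by move=> e /H3; rewrite -cat_rcons -addn1 nseqD cats1.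
Qed.
End Bool.


Section Words.
Variables (T : finType) (x0 : T) (l : nat).

Definition bw (y : seq T) : seq bool :=
  [seq nth x0 y j != nth x0 y (j + l) | j <- iota 0 (size y - l)].
Definition wt y := count id (bw y).

Lemma size_bw y : size (bw y) = size y - l.
Proof. by rewrite size_map size_iota. Qed.

Lemma if_min a b : (a <= b)%N -> (if (a < b)%N then a else b) = a.
Proof. by case: ltngtP => //; lia. Qed.

Lemma tdupE i (x : seq T) : tdup l i x = take (i + l) x ++ drop i x.
Proof. by rewrite /tdup catA -takeD. Qed.

Lemma size_tdup i (x : seq T) : (i + l <= size x)%N -> size (tdup l i x) = size x + l.
Proof. move=> H; rewrite tdupE size_cat size_take size_drop; case: ifP; lia. Qed.

Lemma nth_tdup (x : seq T) i j : (i + l <= size x)%N ->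
  nth x0 (tdup l i x) j = if (j < i + l)%N then nth x0 x j else nth x0 x (j - l).
Proof.
move=> H; rewrite tdupE nth_cat size_take.
rewrite if_min //.
case: ifP => Hj; first by rewrite nth_take.
rewrite nth_drop; congr nth; lia.
Qed.

Lemma bw_tdup (x : seq T) i : (i + l <= size x)%N -> bw (tdup l i x) = ins l i (bw x).
Proof.
move=> H; apply: (@eq_from_nth _ false).
  rewrite /ins !size_cat size_nseq size_take size_drop !size_bw size_tdup // if_min; lia.
rewrite size_bw size_tdup // addnK => j Hj.
rewrite (nth_map 0); last by rewrite size_iota size_tdup // addnK.
rewrite nth_iota ?size_tdup ?addnK // add0n !nth_tdup //.
rewrite /ins nth_cat size_take size_bw.
rewrite if_min; last by lia.
case: (ltnP j i) => Hji.
  rewrite nth_take // (nth_map 0) ?size_iota; last by lia.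
  rewrite nth_iota; last by lia.
  have E1 : (j < i + l)%N by lia.
  have E2 : (j + l < i + l)%N by lia.
  by rewrite add0n E1 E2.
rewrite nth_cat size_nseq.
case: (ltnP (j - i) l) => Hjil.
  have E1 : (j < i + l)%N by lia.
  have E2 : (j + l < i + l)%N = false by lia.
  by rewrite nth_nseq Hjil E1 E2 addnK eqxx.
rewrite nth_drop (nth_map 0) ?size_iota; last by lia.
rewrite nth_iota; last by lia.
have E1 : (j < i + l)%N = false by lia.
have E2 : (j + l < i + l)%N = false by lia.
have E3 : i + (j - i - l) = j - l by lia.
have E4 : j - l + l = j by lia.
by rewrite E1 E2 addnK add0n E3 E4.
Qed.

Lemma reach_lift s (x : seq T) e : (l <= size x)%N -> reach l s (bw x) e ->
  exists y, [/\ bw y = e, size y = size x + s * l & tball l s x y].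
Proof.
move=> Hx; elim: s e => [|s IH] e /=.
  by move=> ->; exists x; rewrite addn0.
move=> [e' [i [/IH [y [Hy Hsy Hb]] [Hi ->]]]].
have Hil : (i + l <= size y)%N by move: Hi; rewrite -Hy size_bw; lia.
exists (tdup l i y); split.
- by rewrite bw_tdup // Hy.
- by rewrite size_tdup // Hsy mulSn; lia.
- by right; exists y; split=> //; exists i.
Qed.

Lemma lift_list (P : seq T -> Prop) (U : seq (seq bool)) :
  (forall e, e \in U -> exists y, bw y = e /\ P y) ->
  exists Y, map bw Y = U /\ forall y, y \in Y -> P y.
Proof.
elim: U => [|e U IH] H; first by exists [::].
have [y [Hy Py]] := H e (mem_head _ _).
have [|Y [HY PY]] := IH; first by move=> e' He'; apply: H; rewrite inE He' orbT.
exists (y :: Y); split; first by rewrite /= Hy HY.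
by move=> y'; rewrite inE => /orP [/eqP ->|/PY].
Qed.

Fixpoint allw (L : nat) : seq (seq T) :=
  if L is L'.+1 then [seq rcons y a | y <- allw L', a <- enum T] else [:: [::]].

Lemma mem_allw L (y : seq T) : (y \in allw L) = (size y == L).
Proof.
elim: L y => [|L IH] y /=.
  by rewrite inE; case: y.
apply/allpairsP/idP.
  by move=> [[y' a] [/= Hy' _ ->]]; rewrite size_rcons eqSS -IH.
case/lastP: y => [|y a] //; rewrite size_rcons eqSS => Hy.
by exists (y, a); rewrite /= IH Hy mem_enum.
Qed.

Lemma uniq_allw L : uniq (allw L).
Proof.
elim: L => [|L IH] //=.
apply: allpairs_uniq => //; first exact: enum_uniq.
move=> [y a] [y' a'] _ _ /= H.
have := congr1 (fun s => last x0 s) H; rewrite !last_rcons => Ha.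
by move: H; rewrite Ha => /rcons_inj [->].
Qed.

Lemma bw_rcons (hl : (0 < l)%N) (y : seq T) a : (l <= size y)%N ->
  bw (rcons y a) = rcons (bw y) (nth x0 y (size y - l) != a).
Proof.
move=> H; apply: (@eq_from_nth _ false).
  by rewrite size_rcons !size_bw size_rcons; lia.
rewrite size_bw size_rcons => j Hj.
rewrite (nth_map 0) ?size_iota ?size_rcons // nth_iota ?size_rcons // add0n.
rewrite [in RHS]nth_rcons size_bw.
case: ltngtP => Hjl.
- rewrite (nth_map 0) ?size_iota // nth_iota // add0n !nth_rcons.
  have E1 : (j < size y)%N by lia.
  have E2 : (j + l < size y)%N by lia.
  by rewrite E1 E2.
- lia.
- have E1 : (j < size y)%N by lia.
  have E2 : (j + l < size y)%N = false by lia.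
  have E3 : (j + l == size y) by apply/eqP; lia.
  by rewrite !nth_rcons E1 E2 E3 Hjl.
Qed.

Lemma wt_small (y : seq T) : (size y <= l)%N -> wt y = 0.
Proof. move=> H; have E : size y - l = 0 by lia.
by rewrite /wt /bw E. Qed.

Import GRing.Theory.
Local Open Scope ring_scope.

Lemma wt_rcons (hl : (0 < l)%N) (y : seq T) a : (l <= size y)%N ->
  wt (rcons y a) = wt y + (nth x0 y (size y - l) != a).
Proof. by move=> H; rewrite /wt bw_rcons // -cats1 count_cat /= addn0. Qed.

Lemma step_sum (hl : (0 < l)%N) (R : nmodType) (F : nat -> R) L : (l <= L)%N ->
  \sum_(y <- allw L.+1) F (wt y) =
  \sum_(y <- allw L) (F (wt y) + F (wt y).+1 *+ #|T|.-1).
Proof.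
move=> HL; rewrite big_allpairs_dep /=; apply: eq_big_seq => y.
rewrite mem_allw => /eqP Hy.
have Hl : (l <= size y)%N by rewrite Hy.
set z := nth x0 y (size y - l).
have E : wt (rcons y z) = wt y by rewrite wt_rcons // eqxx /=; lia.
rewrite big_enum /= (bigD1 z) //= E.
congr (_ + _).
rewrite -(cardC1 z) -sumr_const; apply: eq_bigr => a Ha.
by rewrite wt_rcons // eq_sym Ha /=; congr F; lia.
Qed.

End Words.

Import GRing.Theory Num.Theory.

Lemma core_id m t k : (k <= m)%N ->
  ('C(m, k) * k`! * (m + t)`! = m`! * 'C(m + t, k + t) * (k + t)`!)%N.
Proof.
move=> Hk; apply/eqP; rewrite -(eqn_pmul2r (fact_gt0 (m - k))); apply/eqP.
have E1 := bin_fact Hk.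
have Hkt : (k + t <= m + t)%N by rewrite leq_add2r.
have E2 := bin_fact Hkt.
rewrite subnDr in E2.
transitivity (('C(m, k) * (k`! * (m - k)`!)) * (m + t)`!)%N; first lia.
rewrite E1 -E2; lia.
Qed.

Lemma fact_pow m t : (m`! * m ^ t <= (m + t)`!)%N.
Proof.
elim: t => [|t IH]; first by rewrite expn0 muln1 addn0.
rewrite addnS factS expnS.
have H : (m <= (m + t).+1)%N by lia.
have := leq_mul H IH; lia.
Qed.

Lemma binom_part p m t :
  ((\sum_(k < m.+1) 'C(m + t, k + t) * p ^ k) * p ^ t <= p.+1 ^ (m + t))%N.
Proof.
rewrite -[p.+1]add1n Pascal big_distrl /=.
have -> : (m + t).+1 = (t + m.+1)%N by rewrite addnC addnS.
rewrite big_split_ord /=.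
apply: leq_trans (leq_addl _ _).
apply: leq_sum => k _; rewrite exp1n mul1n -mulnA -expnD (addnC t k); apply: eq_leq; congr (binomial _ _ * _); lia.
Qed.

Local Open Scope ring_scope.

Lemma frac_le (A B C D : nat) : (A * D <= C * B)%N -> (0 < B)%N -> (0 < D)%N ->
  (A%:R / B%:R : rat) <= C%:R / D%:R.
Proof.
move=> H HB HD; rewrite ler_pdivrMr ?ltr0n // mulrAC ler_pdivlMr ?ltr0n //.
by rewrite -!natrM ler_nat.
Qed.

Lemma arith (p l m t : nat) : (2 <= p)%N -> (0 < m)%N ->
  \sum_(k < m.+1) (p ^ l * 'C(m, k) * p.-1 ^ k)%:R * ((k`! * t`!)%:R / ((k + t)`!)%:R)
  <= ((t`!)%:R / (m ^ t)%:R) * ((p ^ (l + m + t))%:R / (p.-1 ^ t)%:R) :> rat.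
Proof.
move=> hp hm.
rewrite (eq_bigr (fun k : 'I_m.+1 => (p ^ l * t`! * m`! * ('C(m + t, k + t) * p.-1 ^ k))%:R / ((m + t)`!)%:R)); last first.
  move=> k _; have Hk : (k <= m)%N by rewrite -ltnS.
  rewrite mulrA; apply/eqP; rewrite eqr_div ?pnatr_eq0 -?lt0n ?fact_gt0 //.
  rewrite -!natrM; apply/eqP; congr (_%:R).
  have := core_id t Hk => E.
  transitivity (p ^ l * t`! * p.-1 ^ k * ('C(m, k) * k`! * (m + t)`!))%N; first lia.
  rewrite E; lia.
rewrite -mulr_suml -natr_sum -big_distrr /= mulf_div.
rewrite -!natrM. apply: frac_le; last first.
- by rewrite muln_gt0 !expn_gt0 hm /=; lia.
- exact: fact_gt0.
set X := (\sum_(k < m.+1) _)%N.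
have H1 := fact_pow m t.
have H2 := binom_part p.-1 m t.
rewrite -/X prednK in H2; last by lia.
rewrite -addnA expnD.
have -> : (p ^ l * t`! * m`! * X * (m ^ t * p.-1 ^ t) = (p ^ l * t`!) * ((m`! * m ^ t) * (X * p.-1 ^ t)))%N by lia.
have -> : (t`! * (p ^ l * p ^ (m + t)) * (m + t)`! = (p ^ l * t`!) * ((m + t)`! * p ^ (m + t)))%N by lia.
by apply: leq_mul => //; apply: leq_mul.
Qed.

Import GRing.Theory Num.Theory.
Local Open Scope ring_scope.

Lemma sum_seq_const (R : nmodType) (I : Type) (r : seq I) (c : R) :
  \sum_(i <- r) c = c *+ size r.
Proof. elim: r => [|a r IH]; by rewrite ?big_nil ?big_cons ?IH ?mulrS. Qed.

Section Count.
Variables (T : finType) (x0 : T) (l : nat).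

Lemma size_allw L : size (allw T L) = (#|T| ^ L)%N.
Proof.
elim: L => [|L IH] //=; by rewrite size_allpairs IH -cardE expnSr.
Qed.

Definition Nm m k : rat := \sum_(y <- allw T (l + m)) ((wt x0 l y == k)%:R).

Lemma Nm_closed (hl : (0 < l)%N) m k : Nm m k = (#|T| ^ l * 'C(m, k) * #|T|.-1 ^ k)%:R.
Proof.
elim: m k => [|m IH] k.
  rewrite /Nm addn0 (eq_big_seq (fun _ => ((0%N == k)%:R : rat))); last first.
    by move=> y; rewrite mem_allw => /eqP Hy; rewrite wt_small // Hy.
  rewrite sum_seq_const size_allw bin0n.
  case: k => [|k] /=; first by rewrite !muln1.
  by rewrite mul0rn muln0 mul0n.
rewrite /Nm addnS (step_sum _ hl (fun j => ((j == k)%:R : rat))); last by rewrite leq_addr.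
rewrite big_split /= sumrMnl -/(Nm m k) IH.
case: k => [|k].
  rewrite (eq_big_seq (fun _ => 0)); last by move=> y _.
  by rewrite big1 // mul0rn addr0 !bin0.
rewrite (eq_big_seq (fun y => ((wt x0 l y == k)%:R : rat))); last by move=> y _.
rewrite (_ : \sum_(i <- allw T (l + m)) ((wt x0 l i == k)%:R : rat) = Nm m k) // IH binS -[X in _ + X]mulr_natr -!natrM -natrD; congr (_%:R).
rewrite mulnDr mulnDl -mulnA -mulnA -mulnA -mulnA; congr (_ + _).
by rewrite expnSr.
Qed.

Lemma S_closed (f : nat -> rat) m :
  \sum_(y <- allw T (l + m)) f (wt x0 l y) = \sum_(k < m.+1) Nm m k * f k.
Proof.
rewrite /Nm.
rewrite [RHS](eq_bigr (fun k : 'I_m.+1 => \sum_(y <- allw T (l + m)) ((wt x0 l y == k)%:R * f k))); last first.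
  by move=> k _; rewrite mulr_suml.
rewrite exchange_big /=; apply: eq_big_seq => y.
rewrite mem_allw => /eqP Hy.
have Hw : (wt x0 l y < m.+1)%N.
  by rewrite ltnS /wt (leq_trans (count_size _ _)) // size_bw Hy addKn.
rewrite (bigD1 (Ordinal Hw)) //= eqxx mul1r big1 ?addr0 // => k Hk.
rewrite (_ : (wt x0 l y == k) = false) ?mul0r //.
by apply/negbTE; apply: contra Hk => /eqP Hk; apply/eqP/val_inj.
Qed.

End Count.

Import Order.TTheory GRing.Theory Num.Theory.
Local Open Scope ring_scope.

Definition pb (P : Prop) : bool := if excluded_middle_informative P then true else false.
Lemma pbP P : reflect P (pb P).
Proof. by rewrite /pb; case: excluded_middle_informative => H; constructor. Qed.

Lemma sub_sum (I : eqType) (Y A : seq I) (F : I -> rat) :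
  uniq Y -> uniq A -> {subset Y <= A} -> (forall y, 0 <= F y) ->
  \sum_(y <- Y) F y <= \sum_(y <- A) F y.
Proof.
move=> uY uA sYA F0.
rewrite -(perm_big _ (permEl (perm_filterC (mem Y) A))) big_cat /=.
have P : perm_eq [seq x <- A | x \in Y] Y.
  apply: uniq_perm => //; first exact: filter_uniq.
  by move=> x; rewrite mem_filter; case Hx: (x \in Y) => //=; rewrite sYA.
by rewrite (perm_big _ P) lerDl sumr_ge0.
Qed.

Lemma gk_one k t : (((k`! * t`!)%:R / ((k + t)`!)%:R : rat) *+ 'C(k + t, t)) = 1.
Proof.
rewrite -[_ *+ 'C(_, _)]mulr_natr mulrAC -natrM.
have := bin_fact (leq_addl k t); rewrite addnK => E.
rewrite (_ : (k`! * t`! * 'C(k + t, t))%N = (k + t)`!); last by rewrite -E; lia.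
by rewrite divff // pnatr_eq0 -lt0n fact_gt0.
Qed.

Theorem lemma1 (p n l t : nat) (hp : (2 <= p)%N) (hn : (0 < n)%N)
  (hl : (0 < l)%N) (ht : (0 < t)%N) (C : {set n.-tuple 'I_p}) :
  tdup_correcting l t C ->
  (#|C|%:R : rat) <=
    ((t`!)%:R / ((n + (t - 1) * l) ^ t)%:R) *
    ((p ^ (n + t * (l + 1)))%:R / ((p - 1) ^ t)%:R).
Proof.
move=> Hcor.
have hp0 : (0 < p)%N by lia.
pose x0 : 'I_p := Ordinal hp0.
set m := (n + (t - 1) * l)%N.
have hm : (0 < m)%N by rewrite /m addn_gt0 hn.
have EN : (n + t * l = l + m)%N.
  have Et : t = (t - 1).+1 by lia.
  by rewrite /m {1}Et mulSn addnCA.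
have EX : (n + t * (l + 1) = l + m + t)%N by rewrite -EN; lia.
rewrite EX subn1.
pose g k := ((k`! * t`!)%:R / ((k + t)`!)%:R : rat).
have g0 : forall k, 0 <= g k by move=> k; rewrite /g divr_ge0 ?ler0n.
set S := \sum_(y <- allw 'I_p (l + m)) g (wt x0 l y).
have HS : S <= ((t`!)%:R / (m ^ t)%:R) * ((p ^ (l + m + t))%:R / (p.-1 ^ t)%:R).
  rewrite /S (S_closed x0 l g m).
  rewrite (eq_bigr (fun k : 'I_m.+1 => (p ^ l * 'C(m, k) * p.-1 ^ k)%:R * g k)); last first.
    by move=> k _; rewrite (Nm_closed x0 hl) card_ord.
  exact: arith.
apply: le_trans HS.
case: (ltnP n l) => Hnl.
  have H1 : (#|C| <= p ^ n)%N by apply: leq_trans (max_card _) _; rewrite card_tuple card_ord.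
  have H2 : (p ^ n <= p ^ l)%N by rewrite leq_pexp2l //; lia.
  apply: (@le_trans _ _ (p ^ l)%:R).
    by rewrite ler_nat; apply: leq_trans H2.
  rewrite /S (S_closed x0 l g m) (bigD1 ord0) //= (Nm_closed x0 hl) card_ord.
  rewrite bin0 !expn0 !muln1 /g fact0 mul1n add0n divff ?mulr1; last by rewrite pnatr_eq0 -lt0n fact_gt0.
  rewrite lerDl sumr_ge0 // => k _.
  by rewrite (Nm_closed x0 hl) mulr_ge0 ?ler0n ?divr_ge0 ?ler0n.
rewrite -sumr_const.
apply: le_trans (_ : \sum_(c in C) \sum_(y <- allw 'I_p (l + m))
     (pb (tball l t (val c) y))%:R * g (wt x0 l y) <= S).
  apply: ler_sum => c Hc.
  set d := bw x0 l (val c).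
  have [uU sU rU] := gen_props hl d 0 t.
  pose P := fun y : seq 'I_p => [/\ size y = (l + m)%N, tball l t (val c) y & wt x0 l y = count id d].
  have HL : forall e, e \in gen l 0 d t -> exists y, bw x0 l y = e /\ P y.
    move=> e He; have Hr := rU e He; rewrite /= in Hr.
    have [_ Hsc] := reach_sc Hr.
    have Hsz : (l <= size (val c))%N by rewrite size_tuple.
    have [y [Hy1 Hy2 Hy3]] := reach_lift Hsz Hr.
    exists y; split=> //; split=> //; first by rewrite Hy2 size_tuple EN.
    by rewrite /wt Hy1 Hsc.
  have [Y [HY PY]] := lift_list HL.
  have uY : uniq Y by apply: (@map_uniq _ _ (bw x0 l)); rewrite HY.
  have sY : size Y = 'C(count id d + t, t) by rewrite -sU -HY size_map.
  apply: le_trans (_ : \sum_(y <- Y) (pb (tball l t (val c) y))%:R * g (wt x0 l y) <= _).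
    rewrite (eq_big_seq (fun _ => g (count id d))); last first.
      move=> y /PY [_ Ht ->]; case: pbP => // _; by rewrite mul1r.
    by rewrite sum_seq_const sY gk_one.
  apply: sub_sum => //; first exact: uniq_allw.
    by move=> y /PY [Hy _ _]; rewrite mem_allw Hy.
  by move=> y; rewrite mulr_ge0 ?ler0n.
rewrite exchange_big /=; apply: ler_sum => y _.
rewrite -mulr_suml; apply: ler_piMl => //.
case: (pickP (fun c => (c \in C) && pb (tball l t (val c) y))) => [c0 /andP [Hc0 Hb0] | Hnone].
  rewrite (bigD1 c0) //= Hb0 big1 ?addr0 // => c /andP [Hc Hne].
  case: pbP => // Hb; case: (Hcor c0 c Hc0 Hc _ y); first by rewrite eq_sym.
  by split=> //; apply/pbP.
rewrite big1 ?ler01 // => c Hc.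
by have := Hnone c; rewrite Hc /= => ->.
Qed.
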